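(* Let $s\ge1$ be an integer and let $(G,Z)$ be a monic plantation. Then there exist $X\subseteq Z$ and $Y\subseteq V(G)\setminus Z$ with $|X|<s$ and $|Y|<2s\cdot s!$ such that exploding the vertices in $X$ and deleting the (remaining) vertices in $Y$ yields a selfless plantation.
   Context: Graphs are finite and simple. Two subsets of $V(G)$ are anticomplete if they are disjoint and no edge joins them; subgraphs are anticomplete if their vertex sets are. $G$ is $s\mathcal{O}$-free if no $s$ cycles of $G$ are pairwise vertex-disjoint and pairwise anticomplete. A set $Z\subseteq V(G)$ is cycle-hitting if every cycle of $G$ has a vertex in $Z$. A plantation is a pair $(G,Z)$ where $G$ is an $s\mathcal{O}$-free graph and $Z\subseteq V(G)$ is cycle-hitting. Let $F=G\setminus Z$ (a forest) and $N$ the set of vertices of $V(G)\setminus Z$ with a neighbour in $Z$. $(G,Z)$ is monic if $Z$ is stable and every vertex of $N$ has exactly one neighbour in $Z$. A transition of $(G,Z)$ is a path of $F$ of length at least one with both ends in $N$ and no internal vertex in $N$; a vertex $z\in Z$ adjacent to an end of a transition $P$ is a foot of $P$. A self-transition is a transition with only one foot; $(G,Z)$ is selfless if it has no self-transition. Deleting a vertex $v\in V(G)\setminus Z$ produces the plantation $(G\setminus\{v\},Z)$. Exploding a vertex $v\in Z$ produces the plantation $(G',Z\setminus\{v\})$, where $G'$ is obtained from $G$ by deleting $v$ and all its neighbours in $V(G)\setminus Z$. *)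

(* Defs.v *)
From mathcomp Require Import all_boot.
Set Implicit Arguments. Unset Strict Implicit. Unset Printing Implicit Defensive.

(* A "plantation" is represented by the vertex
   set W : {set T} of the current (induced) graph G = e[W] and Z : {set T}. *)

Section Plantations.
Variables (T : finType) (e : rel T).

Definition simple_graph : Prop := symmetric e /\ irreflexive e.

Definition is_cycle (W : {set T}) (c : seq T) : bool :=
  [&& 3 <= size c, uniq c, cycle e c & all (fun v => v \in W) c].

Definition anticomplete (c d : seq T) : bool :=
  all (fun x => all (fun y => (x != y) && ~~ e x y) d) c.

Definition sO_free (s : nat) (W : {set T}) : Prop :=
  ~ exists cs : 'I_s -> seq T,
      (forall i, is_cycle W (cs i)) /\
      (forall i j, i != j -> anticomplete (cs i) (cs j)).

Definition cycle_hitting (W Z : {set T}) : Prop :=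
  forall c, is_cycle W c -> has (fun v => v \in Z) c.

Definition plantation (s : nat) (W Z : {set T}) : Prop :=
  [/\ Z \subset W, sO_free s W & cycle_hitting W Z].

Definition Nset (W Z : {set T}) : {set T} :=
  [set v in W :\: Z | [exists z in Z, e v z]].

Definition monic (W Z : {set T}) : Prop :=
  (forall z1 z2, z1 \in Z -> z2 \in Z -> ~~ e z1 z2) /\
  (forall v, v \in Nset W Z -> #|[set z in Z | e v z]| = 1).

Definition transition (W Z : {set T}) (p : seq T) : Prop :=
  [/\ 2 <= size p, uniq p, sorted e p & all (fun v => v \in W :\: Z) p] /\
  [/\ (forall x0, head x0 p \in Nset W Z),
      (forall x0, last x0 p \in Nset W Z) &
      (forall x0 i, 0 < i -> i < (size p).-1 -> nth x0 p i \notin Nset W Z)].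

Definition feet (Z : {set T}) (x0 : T) (p : seq T) : {set T} :=
  [set z in Z | e z (head x0 p) || e z (last x0 p)].

Definition self_transition (W Z : {set T}) (p : seq T) : Prop :=
  transition W Z p /\ forall x0, #|feet Z x0 p| = 1.

Definition selfless (W Z : {set T}) : Prop :=
  forall p, ~ self_transition W Z p.

(* Exploding every vertex of X (a subset of Z): remove X and all neighbours
   of vertices of X lying in V(G) \ Z.  (Sequential explosion of the vertices
   of X, in any order, gives exactly this, since Z\X is untouched.) *)
Definition explode (W Z X : {set T}) : {set T} * {set T} :=
  ((W :\: X) :\: [set u in W :\: Z | [exists x in X, e x u]], Z :\: X).

Definition delete (W Z Y : {set T}) : {set T} * {set T} := (W :\: Y, Z).

End Plantations.

(* Main.v *)
Require Import Defs.
From mathcomp Require Import all_boot zify.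
From Stdlib Require Import Classical_Prop.
Set Implicit Arguments. Unset Strict Implicit. Unset Printing Implicit Defensive.

Section Proof.
Variables (T : finType) (e : rel T) (s : nat) (Z : {set T}).
Hypotheses (esym : symmetric e) (eirr : irreflexive e) (s1 : 1 <= s)
  (sO : sO_free e s setT) (hit : cycle_hitting e setT Z) (mon : monic e setT Z).

Definition rS (A : {set T}) : rel T := [rel x y | [&& e x y, x \in A & y \in A]].
Definition F := ~: Z.
Local Notation comp A t := [set x | connect (rS A) t x].

Lemma rS_sym A : symmetric (rS A).
Proof. by move=> x y; rewrite /rS /= (esym x y); case: (x \in A); case: (y \in A); rewrite ?andbF ?andbT. Qed.

Lemma path_rS_all (A : {set T}) (a : T) p : path (rS A) a p -> all (mem A) p.
Proof.
by elim: p a => //= y p IH a /andP[/and3P[_ _ ->] /IH].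
Qed.

Lemma connect_in (A : {set T}) (a b : T) : a \in A -> connect (rS A) a b -> b \in A.
Proof.
move=> Ha /connectP [p Hp ->]; elim: p a Ha Hp => //= y p IH a Ha.
by case/andP=> /and3P[_ _ Hy] Hp; exact: IH Hp.
Qed.

Lemma connect_split (A D : {set T}) (a b : T) : connect (rS A) a b ->
  connect (rS (A :\: D)) a b \/ exists2 p, p \in D & connect (rS A) a p.
Proof.
move/connectP=> [p Hp ->]; elim: p a Hp => [|y p IH] a /=.
  by left; exact: connect0.
case/andP=> Hay Hp; case: (boolP (a \in D)) => aD.
  by right; exists a => //; exact: connect0.
case: (boolP (y \in D)) => yD.
  by right; exists y => //; exact: connect1.
case: (IH y Hp) => [H|[q qD H]].
  left; apply: connect_trans H; apply: connect1.
  by move/and3P: Hay => [H1 H2 H3]; rewrite /rS /= !inE aD yD H1 H2 H3.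
by right; exists q => //; apply: connect_trans H; exact: connect1.
Qed.

Lemma connect_mono (A1 A2 : {set T}) (a b : T) : A1 \subset A2 -> connect (rS A1) a b -> connect (rS A2) a b.
Proof.
move=> sub; apply: connect_sub => x y /and3P[H1 H2 H3]; apply: connect1.
by rewrite /rS /= H1 (subsetP sub _ H2) (subsetP sub _ H3).
Qed.

Lemma path_to_rS (A : {set T}) (a : T) p : path e a p -> all (mem A) (a :: p) -> path (rS A) a p.
Proof.
move=> Hp Ha; apply: (sub_in_path (P := mem A)) Ha Hp.
by move=> x y xA yA exy; rewrite /rS /= exy xA yA.
Qed.

Lemma path_of_rS (A : {set T}) (a : T) p : path (rS A) a p -> path e a p.
Proof. by apply: sub_path => x y /and3P[]. Qed.

Lemma lemmaA (t c p : T) : t \in F -> e t c -> e t p -> c != p -> c \in F ->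
  connect (rS (F :\ t)) c p -> False.
Proof.
move=> Ht etc etp cp Hc /connectP [q Hq Hl]; subst p.
move: etp cp; case/shortenP: Hq => q' Hq' Uq' _ etp cp.
have ct : c != t by apply/eqP => ct; rewrite ct eirr in etc.
have cF : c \in F :\ t by rewrite in_setD1 ct Hc.
have allq : all (mem (F :\ t)) (c :: q') by rewrite /= cF (path_rS_all Hq').
case: q' Hq' Uq' etp cp allq => [|x q'] Hq' Uq' etp cp allq; first by rewrite eqxx in cp.
have tn : t \notin c :: x :: q'.
  by apply/negP => /(allP allq); rewrite /= in_setD1 eqxx.
have Hcyc : is_cycle e setT (t :: c :: x :: q').
  apply/and4P; split.
  - by [].
  - by rewrite cons_uniq tn Uq'.
  - rewrite /cycle rcons_path; apply/andP; split; last by rewrite /= esym.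
    by move: (path_of_rS Hq') => /= ->; rewrite etc.
  - by apply/allP => ? _; exact: in_setT.
have /hasP [v vin vZ] := hit Hcyc.
have : v \in F.
  move: vin; rewrite inE => /orP[/eqP -> //|] vin.
  by have := allP allq v vin; rewrite /= in_setD1 => /andP[].
by rewrite /F inE vZ.
Qed.

Definition bad (X Y : {set T}) (z : T) (p : seq T) : Prop :=
  [/\ 1 < size p, uniq p, sorted e p, all (fun v => (v \notin Z) && (v \notin Y)) p &
   [/\ z \in Z, z \notin X, e z (head z p), e z (last z p) &
       forall v w, v \in p -> w \in Z -> e v w -> w = z]].

Lemma bad_cycle (X Y : {set T}) z p : bad X Y z p -> is_cycle e setT (z :: p).
Proof.
case: p => [|a q] [Hs Hu Hsort Hall [zZ zX eh el Hl]] //.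
apply/and4P; split.
- by move: Hs => /=; lia.
- rewrite cons_uniq Hu andbT; apply/negP => /(allP Hall) /andP[].
  by rewrite zZ.
- rewrite /cycle rcons_path; apply/andP; split; last by rewrite esym.
  by rewrite /= eh.
- by apply/allP => ? _; exact: in_setT.
Qed.

Lemma anti_sym c d : anticomplete e c d -> anticomplete e d c.
Proof.
move=> H; apply/allP => x xd; apply/allP => y yc.
move/allP: H => /(_ y yc) /allP /(_ x xd) /andP[].
by rewrite eq_sym esym => -> ->.
Qed.

Lemma bad_mono (X Y X' Y' : {set T}) z p : X \subset X' -> Y \subset Y' -> bad X' Y' z p -> bad X Y z p.
Proof.
move=> sX sY [Hs Hu Hsort Hall [zZ zX eh el Hl]]; split => //.
  apply/allP => v vp; have /andP[-> vY] := allP Hall v vp.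
  by apply/negP => /(subsetP sY); rewrite (negbTE vY).
split => //; apply/negP => /(subsetP sX); by rewrite (negbTE zX).
Qed.

Lemma ex_min (P : nat -> Prop) : (exists n, P n) -> exists n, P n /\ forall m, P m -> n <= m.
Proof.
move=> [n Pn].
suff H : forall k n, n <= k -> P n -> exists n, P n /\ forall m, P m -> n <= m.
  exact: (H n n).
clear n Pn; elim=> [|k IH] n.
  by rewrite leqn0 => /eqP -> P0; exists 0; split.
move=> Hn Pn; case: (classic (exists m, P m /\ m < n)) => [[m [Pm lt]]|H].
  by apply: (IH m) => //; rewrite -ltnS (leq_trans lt Hn).
exists n; split => // m Pm; rewrite leqNgt; apply/negP => lt; apply: H; exists m.
by split.
Qed.

Definition cand (X Y : {set T}) n := exists (t : T) (D : {set T}), [/\ t \in F, D \subset F, (forall p, p \in D -> e t p),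
  #|D| <= 1 &
  (exists z P, bad X Y z P /\ {subset P <= comp (F :\: D) t}) /\ #|comp (F :\: D) t| = n].

Lemma extract (X Y : {set T}) z0 p0 : bad X Y z0 p0 -> exists z P (t : T) (D : {set T}),
  [/\ bad X Y z P, t \in F, D \subset F, #|D| <= 1 &
   forall z' q, bad X Y z' q -> z' != z -> t \notin q -> (forall y, y \in q -> y \notin D) ->
     anticomplete e (z :: P) (z' :: q)].
Proof.
move=> B0.
have [n [[t [D [Ht HD HtD HD1 [[z [P [BP PB]]] Hn]]]] Hmin]] :
    exists n, cand X Y n /\ forall m, cand X Y m -> n <= m.
  apply: ex_min; case: p0 B0 => [|a q0] B0; first by case: B0.
  exists #|comp (F :\: set0) a|, a, set0.
  case: (B0) => _ _ Hsort Hall _.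
  split => //.
  - by have /andP[aZ _] := allP Hall a (mem_head _ _); rewrite /F inE.
  - exact: sub0set.
  - by move=> p; rewrite in_set0.
  - by rewrite cards0.
  split => //; exists z0, (a :: q0); split => //.
  have Hp : path (rS (F :\: set0)) a q0.
    have Ha2 : all (mem (F :\: set0)) (a :: q0).
      apply/allP => v vin; rewrite /= setD0 /F inE.
      by have /andP[] := allP Hall v vin.
    exact: (path_to_rS Hsort Ha2).
  by move=> y yin; rewrite inE; exact: (path_connect Hp yin).
set A := F :\: D.
set B := comp A t.
have tD : t \notin D by apply/negP => /HtD; rewrite eirr.
have tA : t \in A by rewrite in_setD tD Ht.
have BA : forall x, x \in B -> x \in A.
  by move=> x; rewrite inE => xB; exact: connect_in tA xB.
have key : forall z' q, bad X Y z' q -> t \notin q -> forall y, y \in q -> y \notin B.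
  move=> z' q Bq tq x xq; apply/negP => xB.
  rewrite inE in xB; move/connectP: xB => [r Hr Hx].
  move: xq; rewrite Hx; case/shortenP: Hr => r' Hr' Ur' _ xq.
  case: r' Hr' Ur' xq => [|c r''] Hr' Ur' xq; first by rewrite /= xq in tq.
  move: Hr' => /= /andP [/and3P [etc _ cA] Hr''].
  have cD : c \notin D by move: cA; rewrite in_setD => /andP[].
  have cF : c \in F by move: cA; rewrite in_setD => /andP[].
  have allA : all (mem A) (c :: r'') by rewrite /= cA (path_rS_all Hr'').
  have tn : t \notin c :: r'' by move: Ur'; rewrite cons_uniq => /andP[].
  have allr : all (mem (F :\ t)) (c :: r'').
    apply/allP => v vin; rewrite /= in_setD1.
    have := allP allA v vin; rewrite /= in_setD => /andP[_ ->]; rewrite andbT.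
    by apply/eqP => vt; rewrite -vt vin in tn.
  have cFt : c \in F :\ t by have := allP allr c (mem_head _ _).
  have Hc : connect (rS (F :\ t)) c (last c r'').
    by apply/connectP; exists r'' => //; apply: path_to_rS (path_of_rS Hr'') allr.
  case: q Bq tq xq => [|a q'] Bq tq xq; first by case: Bq.
  case: (Bq) => _ _ Hsort Hall _.
  have allq : all (mem (F :\ t)) (a :: q').
    apply/allP => v vin; rewrite /= in_setD1.
    have /andP[vZ _] := allP Hall v vin; rewrite /F inE vZ andbT.
    by apply/eqP => vt; rewrite -vt vin in tq.
  have Pq := path_to_rS Hsort allq.
  have Hqc : forall y, y \in a :: q' -> connect (rS (F :\ t)) c y.
    move=> y yq; apply: (connect_trans Hc); apply: (connect_trans (y := a)).
      by rewrite (sym_connect_sym (rS_sym _)); exact: (path_connect Pq xq).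
    exact: (path_connect Pq yq).
  have Hcand : cand X Y #|comp (F :\ t) c|.
    exists c, [set t]; split.
    - exact: cF.
    - by rewrite sub1set.
    - by move=> p; rewrite inE => /eqP ->; rewrite esym.
    - by rewrite cards1.
    split => //; exists z', (a :: q'); split => //.
    by move=> y yq; rewrite inE; exact: Hqc.
  have := Hmin _ Hcand; rewrite -Hn; apply/negP; rewrite -ltnNge.
  apply: proper_card; apply/properP; split.
    apply/subsetP => y; rewrite inE => Hy; rewrite inE.
    case: (connect_split D Hy) => [H|[p pD H]].
      apply: (connect_trans (y := c)); first by apply: connect1; rewrite /rS /= etc tA cA.
      apply: connect_mono H; apply/subsetP => v; rewrite !inE.
      by case/andP => -> /andP[_ ->].
    exfalso; apply: (lemmaA Ht etc (HtD p pD) _ cF H).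
    by apply/eqP => cp; rewrite cp pD in cD.
  exists t; first by rewrite inE; exact: connect0.
  rewrite inE; apply/negP => /(connect_in cFt); by rewrite in_setD1 eqxx.
exists z, P, t, D; split => //.
move=> z' q Bq zz tq qD.
case: (Bq) => _ _ _ Hall' [z'Z z'X eh' el' Hl'].
case: (BP) => _ _ _ Hall [zZ zX eh el Hl].
case: mon => Hst _.
apply/allP => x xin; apply/allP => y yin.
move: xin yin; rewrite !inE => /orP[/eqP->|xP] /orP[/eqP->|yq].
- by rewrite eq_sym zz /=; exact: Hst.
- have /andP[yZ _] := allP Hall' y yq.
  apply/andP; split; first by apply/eqP => zy; rewrite -zy zZ in yZ.
  apply/negP => ezy; have := Hl' y z yq zZ; rewrite esym => /(_ ezy) zz'.
  by rewrite zz' eqxx in zz.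
- have /andP[xZ _] := allP Hall x xP.
  apply/andP; split; first by apply/eqP => xz; rewrite xz z'Z in xZ.
  apply/negP => exz; have := Hl x z' xP z'Z exz => zz'.
  by rewrite zz' eqxx in zz.
- have xB : x \in B by exact: PB.
  have yB := key z' q Bq tq y yq.
  apply/andP; split; first by apply/eqP => xy; rewrite xy (negbTE yB) in xB.
  apply/negP => exy; move: yB; rewrite inE => /negP; apply.
  move: xB; rewrite inE => xB; apply: (connect_trans xB); apply: connect1.
  have /andP[yZ _] := allP Hall' y yq.
  rewrite /rS /= exy (BA x) ?inE ?xB //=.
  by rewrite (qD y yq) yZ.
Qed.


Definition inv (X Y : {set T}) (L : seq (T * seq T)) : Prop :=
 [/\ X \subset Z, Y \subset F, #|X| <= size L, #|Y| <= 2 * size L &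
  [/\ forall a, a \in L -> is_cycle e setT (a.1 :: a.2),
      pairwise (fun a b : T * seq T => anticomplete e (a.1 :: a.2) (b.1 :: b.2)) L &
      forall a, a \in L -> forall z q, bad X Y z q -> anticomplete e (a.1 :: a.2) (z :: q)]].

Lemma inv_size X Y L : inv X Y L -> size L < s.
Proof.
case=> _ _ _ _ [Hc Hp _]; rewrite ltnNge; apply/negP => Hs.
set M := [seq a.1 :: a.2 | a <- L].
have sM : size M = size L by rewrite size_map.
have HpM : pairwise (anticomplete e) M by rewrite /M pairwise_map; exact: Hp.
move/(pairwiseP [::]): HpM => H.
apply: sO; exists (fun i : 'I_s => nth [::] M i); split.
  move=> i; have iM : i < size M by rewrite sM (leq_trans (ltn_ord i) Hs).
  have /mapP [a aL ->] := mem_nth [::] iM; exact: Hc.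
move=> i j ij.
have iM : i < size M by rewrite sM (leq_trans (ltn_ord i) Hs).
have jM : j < size M by rewrite sM (leq_trans (ltn_ord j) Hs).
case: (ltngtP i j) => [lt|gt|eq].
- exact: H.
- by apply: anti_sym; exact: H.
- by move/val_inj: eq => eq; rewrite eq eqxx in ij.
Qed.

Lemma step X Y L z0 p0 : inv X Y L -> bad X Y z0 p0 ->
  exists X' Y' L', inv X' Y' L' /\ size L' = (size L).+1.
Proof.
move=> [HX HY cX cY [Hc Hp Ha]] B0.
have [z [P [t [D [BP Ht HD HD1 Hant]]]]] := extract B0.
case: (BP) => _ _ _ _ [zZ zX _ _ _].
exists (z |: X), (Y :|: (t |: D)), ((z, P) :: L); split => //.
split.
- by rewrite subUset sub1set zZ HX.
- by rewrite !subUset sub1set Ht HY HD.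
- by rewrite cardsU1 /=; have := leq_b1 (z \notin X); lia.
- have := leq_subr #|Y :&: (t |: D)| (#|Y| + #|t |: D|); rewrite -cardsU.
  rewrite cardsU1 /=; have := leq_b1 (t \notin D); lia.
split.
- move=> a; rewrite inE => /orP[/eqP ->|aL]; [exact: bad_cycle BP | exact: Hc].
- rewrite pairwise_cons Hp andbT; apply/allP => a aL; apply: anti_sym; exact: Ha a aL z P BP.
- move=> a; rewrite inE => /orP[/eqP ->|aL] z' q Bq.
    have B' := bad_mono (subsetUr _ _) (subsetUl _ _) Bq.
    case: (Bq) => _ _ _ Hall' [_ z'X _ _ _].
    apply: Hant => //.
    + by apply/eqP => zz; rewrite zz setU11 in z'X.
    + by apply/negP => tq; have /andP[_] := allP Hall' t tq; rewrite !inE eqxx orbT.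
    + move=> y yq; apply/negP => yD; have /andP[_] := allP Hall' y yq.
      by rewrite !inE yD !orbT.
  apply: (Ha a aL); exact: bad_mono (subsetUr _ _) (subsetUl _ _) Bq.
Qed.

Lemma iterate n : forall X Y L, inv X Y L -> s - size L <= n ->
  exists X Y : {set T}, [/\ X \subset Z, Y \subset F, #|X| < s, #|Y| < 2 * s * s`! &
     forall z q, ~ bad X Y z q].
Proof.
elim: n => [|n IH] X Y L I Hn; have Hs := inv_size I.
  by exfalso; lia.
case: (classic (exists z q, bad X Y z q)) => [[z [q Bq]]|NB].
  have [X' [Y' [L' [I' HL']]]] := step I Bq.
  by apply: (IH _ _ _ I'); rewrite HL'; lia.
case: I => HX HY cX cY _; exists X, Y; split => //.
- by lia.
- by have := fact_gt0 s; nia.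
- by move=> z q Bq; apply: NB; exists z, q.
Qed.

Lemma uniq_label u z1 z2 : u \notin Z -> z1 \in Z -> z2 \in Z -> e u z1 -> e u z2 -> z1 = z2.
Proof.
move=> uZ H1 H2 e1 e2; case: mon => _ Hm.
have Hu : u \in Nset e setT Z.
  by rewrite /Nset inE in_setD in_setT uZ /=; apply/existsP; exists z1; rewrite H1 e1.
have /eqP/cards1P [w Hw] := Hm u Hu.
have : z1 \in [set z in Z | e u z] by rewrite inE H1 e1.
have : z2 \in [set z in Z | e u z] by rewrite inE H2 e2.
by rewrite Hw !inE => /eqP -> /eqP ->.
Qed.


Lemma final (X Y : {set T}) : X \subset Z -> Y \subset F -> (forall z q, ~ bad X Y z q) ->
  plantation e s (((setT :\: X) :\: [set u in setT :\: Z | [exists x in X, e x u]]) :\: Y) (Z :\: X) /\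
  selfless e (((setT :\: X) :\: [set u in setT :\: Z | [exists x in X, e x u]]) :\: Y) (Z :\: X).
Proof.
move=> HX HY NB.
set W' := _ :\: Y.
have inW : forall v, v \in W' -> [/\ v \notin Y, v \notin X & ~~ ((v \notin Z) && [exists x in X, e x v])].
  by move=> v; rewrite !inE => /and4P [-> H -> _]; rewrite andbT in H.
have cycT : forall c, is_cycle e W' c -> is_cycle e setT c.
  move=> c /and4P [H1 H2 H3 _]; rewrite /is_cycle H1 H2 H3 /=.
  by apply/allP => ? _; exact: in_setT.
split; first split.
- apply/subsetP => v; rewrite !inE => /andP[vX vZ]; rewrite vX vZ /= !andbT.
  by apply/negP => /(subsetP HY); rewrite /F inE vZ.
- move=> [cs [Hc Ha]]; apply: sO; exists cs; split => // i; exact: cycT.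
- move=> c Hc; have /hasP [v vc vZ] := hit (cycT _ Hc).
  apply/hasP; exists v => //; rewrite inE vZ andbT.
  by move/and4P: Hc => [_ _ _ /allP /(_ v vc) /inW []].
move=> p [[[Hsz Hu Hso Hall] [Hh Hl Hi]] Hf].
case: p Hsz Hu Hso Hall Hh Hl Hi Hf => [|a q] // Hsz Hu Hso Hall Hh Hl Hi Hf.
have Hall2 : forall v, v \in a :: q -> [/\ v \notin Z, v \notin Y & v \in W'].
  move=> v vin; have := allP Hall v vin; rewrite in_setD => /andP[vZX vW].
  have [vY vX _] := inW v vW; split => //.
  by apply/negP => vZ; rewrite in_setD vZ vX in vZX.
have getl : forall u, u \in Nset e W' (Z :\: X) -> exists2 z, z \in Z :\: X & e u z.
  by move=> u; rewrite inE => /andP[_ /existsP [z /andP [zZ euz]]]; exists z.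
have [z zZX eaz] := getl a (Hh a).
have [z2 z2ZX elz] := getl (last a q) (Hl a).
have zz2 : z = z2.
  have /eqP/cards1P [w Hw] := Hf a.
  have : z \in feet e (Z :\: X) a (a :: q) by rewrite /feet inE zZX /= (esym z a) eaz.
  have : z2 \in feet e (Z :\: X) a (a :: q) by rewrite /feet inE z2ZX /= (esym z2 (last a q)) elz orbT.
  by rewrite Hw !inE => /eqP -> /eqP ->.
subst z2.
move: zZX; rewrite in_setD => /andP[zX zZ].
apply: (NB z (a :: q)); split => //.
  apply/allP => v vin; have [vZ vY _] := Hall2 v vin; by rewrite vZ vY.
split => //.
- by rewrite /= esym.
- by rewrite /= esym.
move=> v w vin wZ evw.
have [vZ vY vW] := Hall2 v vin.
case: (eqVneq v a) => [va|va].
  by subst v; apply: (uniq_label vZ wZ zZ evw eaz).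
case: (eqVneq v (last a q)) => [vl|vl].
  by subst v; apply: (uniq_label vZ wZ zZ evw elz).
exfalso.
set i := index v (a :: q).
have iS : i < size (a :: q) by rewrite index_mem.
have ni : nth a (a :: q) i = v by rewrite nth_index.
have i0 : 0 < i by rewrite /i /= eq_sym (negbTE va).
have il : i < (size (a :: q)).-1.
  rewrite ltn_neqAle -ltnS prednK // iS andbT; apply/eqP => iE.
  by move: ni; rewrite iE nth_last /= => H; rewrite H eqxx in vl.
have := Hi a i i0 il; rewrite ni => /negP; apply.
case: (boolP (w \in X)) => wX.
  have [_ _ H] := inW v vW; move/negP: H; case; rewrite vZ /=.
  by apply/existsP; exists w; rewrite wX esym evw.
rewrite inE; apply/andP; split.
  by rewrite in_setD vW andbT in_setD negb_and vZ orbT.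
by apply/existsP; exists w; rewrite in_setD wX wZ evw.
Qed.

End Proof.

Theorem mainTheorem9 (T : finType) (e : rel T) (s : nat) (Z : {set T}) :
  simple_graph e -> 1 <= s ->
  plantation e s [set: T] Z -> monic e [set: T] Z ->
  exists (X Y : {set T}),
    [/\ X \subset Z, Y \subset ~: Z, #|X| < s, #|Y| < 2 * s * s`! &
      let WZ := explode e [set: T] Z X in
      let WZ' := delete WZ.1 WZ.2 Y in
      plantation e s WZ'.1 WZ'.2 /\ selfless e WZ'.1 WZ'.2].
Proof.
move=> [esym eirr] s1 HP Hm.
have HP' := HP; case: HP' => _ sO hit.
have I0 : inv e Z set0 set0 [::].
  by split; rewrite ?sub0set ?cards0 //; split.
have [X [Y [HX HY cX cY NB]]] :=
  @iterate _ _ _ _ esym eirr s1 sO hit Hm s _ _ _ I0 ltac:(by rewrite subn0).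
exists X, Y; split => //.
rewrite /explode /delete /=.
exact: (final esym sO hit Hm HX HY NB).
Qed.
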